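(* Let $A,B,C$ be dendrons. If $AB=AC$, then $B=C$.
   Context: A finite dynamical system (FDS) is a function $A:S_A\to S_A$ on a finite set, considered up to isomorphism of functional graphs (arcs $x\to A(x)$). The product $AB$ acts on $S_A\times S_B$ by $(a,b)\mapsto(A(a),B(b))$. A dendron is an FDS whose functional graph is connected and which has a fixpoint (a state $s$ with $A(s)=s$). *)

(* Defs.v *)
From mathcomp Require Import all_boot.
Set Implicit Arguments. Unset Strict Implicit. Unset Printing Implicit Defensive.

(* A finite dynamical system is a function f : T -> T on a finite type T. *)

Definition fds_iso (T U : finType) (f : T -> T) (g : U -> U) : Prop :=
  exists h : T -> U, bijective h /\ forall x, h (f x) = g (h x).

Definition fds_prod (T U : finType) (f : T -> T) (g : U -> U) : T * U -> T * U :=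
  fun p => (f p.1, g p.2).

Definition fds_adj (T : finType) (f : T -> T) : rel T :=
  fun x y => (f x == y) || (f y == x).

Definition fds_connected (T : finType) (f : T -> T) : Prop :=
  forall x y : T, connect (fds_adj f) x y.

Definition dendron (T : finType) (f : T -> T) : Prop :=
  fds_connected f /\ exists s : T, f s = s.

(* Main.v *)
Require Import Defs.
From mathcomp Require Import all_boot.
Set Implicit Arguments. Unset Strict Implicit. Unset Printing Implicit Defensive.

Definition homb (T U : finType) (f : T -> T) (g : U -> U) (k : {ffun T -> U}) : bool :=
  [forall x, k (f x) == g (k x)].
Definition kerk (T U : finType) (k : {ffun T -> U}) : {set T * T} :=
  [set p | k p.1 == k p.2].
Definition diagT (T : finType) : {set T * T} := [set p | p.1 == p.2].
Definition homs (T U : finType) (f : T -> T) (g : U -> U) :=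
  [set k : {ffun T -> U} | homb f g k].
Definition cnt (T U : finType) (f : T -> T) (g : U -> U) (th : {set T * T}) :=
  #|[set k : {ffun T -> U} | homb f g k && (kerk k == th)]|.

Lemma homs_sum (T U : finType) (f : T -> T) (g : U -> U) :
  #|homs f g| = \sum_(th : {set T * T}) cnt f g th.
Proof.
rewrite -sum1_card (partition_big (@kerk T U) predT) //=.
apply: eq_bigr => th _; rewrite /cnt -sum1_card; apply: eq_bigl => k.
by rewrite !inE.
Qed.

Lemma quot_cnt (T : finType) (f : T -> T) (th : {set T * T})
  (Hr : forall x, (x, x) \in th) (Hs : forall x y, (x, y) \in th -> (y, x) \in th)
  (Ht : forall x y z, (x, y) \in th -> (y, z) \in th -> (x, z) \in th)
  (Hc : forall x y, (x, y) \in th -> (f x, f y) \in th) :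
  exists (Y : finType) (fY : Y -> Y), (th != diagT T -> #|Y| < #|T|) /\
    forall (U : finType) (g : U -> U), cnt f g th = cnt fY g (diagT Y).
Proof.
pose rep x := odflt x [pick z | (z, x) \in th].
have rep_th x : (rep x, x) \in th.
  by rewrite /rep; case: pickP => [z //|/(_ x)]; rewrite Hr.
have rep_eq x y : (rep x == rep y) = ((x, y) \in th).
  apply/eqP/idP => [E|Hxy].
    by apply: Ht (Hs _ _ (rep_th x)) _; rewrite E.
  have E : [pick z | (z, x) \in th] = [pick z | (z, y) \in th].
    apply: eq_pick => z; apply/idP/idP => H.
      exact: Ht H Hxy.
    exact: Ht H (Hs _ _ Hxy).
  rewrite /rep E; case: pickP => [z _|/(_ y)] //.
  by rewrite Hr.
have rep_idem x : rep (rep x) == rep x by rewrite rep_eq rep_th.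
pose Y := {x : T | rep x == x}.
pose toY (x : T) : Y := exist _ (rep x) (rep_idem x).
have toY_val (y : Y) : toY (val y) = y.
  by apply: val_inj => /=; apply/eqP; exact: (valP y).
pose fY (y : Y) : Y := toY (f (val y)).
exists Y, fY; split.
  move=> hne.
  have [z hz] : exists z, rep z != z.
    have [p hp hpd] : exists2 p, p \in th & p \notin diagT T.
      apply/exists_inP; apply: contraR hne; rewrite negb_exists_in => /forall_inP H.
      apply/eqP/setP => p; apply/idP/idP => hp; first by have := H p hp; rewrite negbK.
      by case: p hp; move=> x y; rewrite inE /= => /eqP <-.
    case: p hp hpd => x y hxy; rewrite inE /= => hxy'.
    case hx: (rep x == x); last by exists x; rewrite hx.
    exists y; apply: contra hxy' => /eqP hy.
    by rewrite -(eqP hx) -hy rep_eq.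
  rewrite card_sig -(cardC [pred x | rep x == x]) -[X in X < _]addn0 ltn_add2l.
  by apply/card_gt0P; exists z; rewrite !inE /= hz.
move=> U g.
pose Phi (k : {ffun Y -> U}) : {ffun T -> U} := [ffun x => k (toY x)].
have Phi_inj : injective Phi.
  move=> k1 k2 E; apply/ffunP => y.
  by have := congr1 (fun h : {ffun T -> U} => h (val y)) E; rewrite /= !ffunE toY_val.
have toY_f x : toY (f x) = fY (toY x).
  apply: val_inj => /=; apply/eqP; rewrite rep_eq.
  exact: Hc _ _ (Hs _ _ (rep_th x)).
rewrite /cnt -[RHS](card_imset _ Phi_inj); apply: eq_card => k.
rewrite inE; apply/idP/imsetP; last first.
  case=> k0; rewrite inE => /andP [hk0 /eqP kk0] ->.
  apply/andP; split.
    apply/forallP => x; rewrite !ffunE toY_f.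
    exact: (forallP hk0).
  apply/eqP/setP => -[x y]; rewrite !inE /= !ffunE -rep_eq.
  apply/eqP/eqP => [E|E].
    have : (toY x, toY y) \in kerk k0 by rewrite inE /= E.
    by rewrite kk0 inE /= => /eqP [].
  by congr (k0 _); apply: val_inj.
move=> /andP [hk /eqP kk].
have krep x : k (rep x) = k x.
  by apply/eqP; have := rep_th x; rewrite -kk inE.
exists [ffun y => k (val y)].
  rewrite inE; apply/andP; split.
    apply/forallP => y; rewrite !ffunE /= krep; exact: (forallP hk).
  apply/eqP/setP => -[y1 y2]; rewrite !inE /= !ffunE.
  apply/idP/idP => [E|/eqP -> //].
  have : (val y1, val y2) \in kerk k by rewrite inE.
  rewrite kk -rep_eq (eqP (valP y1)) (eqP (valP y2)) => /eqP E'.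
  by apply/eqP; apply: val_inj.
by apply/ffunP => x; rewrite !ffunE /= krep.
Qed.

Lemma quot_of_hom (T U : finType) (f : T -> T) (g : U -> U) (k : {ffun T -> U})
  (th : {set T * T}) : homb f g k -> kerk k = th ->
  exists (Y : finType) (fY : Y -> Y), (th != diagT T -> #|Y| < #|T|) /\
    forall (U : finType) (g : U -> U), cnt f g th = cnt fY g (diagT Y).
Proof.
move=> hk <-; apply: quot_cnt.
- by move=> x; rewrite inE.
- by move=> x y; rewrite !inE /= eq_sym.
- by move=> x y z; rewrite !inE /= => /eqP -> .
- move=> x y; rewrite !inE /= => /eqP E.
  by rewrite (eqP (forallP hk x)) (eqP (forallP hk y)) E.
Qed.

Lemma step (TB TC : finType) (b : TB -> TB) (c : TC -> TC)
  (H : forall (T : finType) (f : T -> T), #|homs f b| = #|homs f c|)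
  (T : finType) (f : T -> T)
  (IH : forall (T' : finType) (f' : T' -> T'), #|T'| < #|T| ->
          forall th, cnt f' b th = cnt f' c th) :
  forall th, cnt f b th = cnt f c th.
Proof.
have off : forall th, th != diagT T -> cnt f b th = cnt f c th.
  move=> th hth.
  have main : forall (U : finType) (g : U -> U) (k : {ffun T -> U}),
      homb f g k -> kerk k = th -> cnt f b th = cnt f c th.
    move=> U g k hk kk; have [Y [fY [hY E]]] := quot_of_hom hk kk.
    by rewrite !E; apply: IH; apply: hY.
  case: (set_0Vmem [set k : {ffun T -> TB} | homb f b k && (kerk k == th)]) => [EB|[k]].
    case: (set_0Vmem [set k : {ffun T -> TC} | homb f c k && (kerk k == th)]) => [EC|[k]].
      by rewrite /cnt EB EC !cards0.
    by rewrite inE => /andP [hk /eqP kk]; apply: main hk kk.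
  by rewrite inE => /andP [hk /eqP kk]; apply: main hk kk.
move=> th; case: (eqVneq th (diagT T)) => [->|]; last exact: off.
have E := H T f; rewrite !homs_sum in E.
rewrite (bigD1 (diagT T)) // [X in _ = X](bigD1 (diagT T)) //= in E.
rewrite (eq_bigr (fun th => cnt f c th)) in E; last by move=> th' hth'; apply: off.
by move/eqP: E; rewrite eqn_add2r => /eqP.
Qed.

Lemma inj_cnt_eq (TB TC : finType) (b : TB -> TB) (c : TC -> TC)
  (H : forall (T : finType) (f : T -> T), #|homs f b| = #|homs f c|) :
  forall n (T : finType) (f : T -> T), #|T| <= n -> forall th, cnt f b th = cnt f c th.
Proof.
elim=> [|n IHn] T f hT; apply: step => // T' f' hT'.
  by move: (leq_trans hT' hT).
by apply: IHn; rewrite -ltnS; apply: leq_trans hT' hT.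
Qed.

Lemma prod_cnt (T UA UB : finType) (f : T -> T) (ga : UA -> UA) (gb : UB -> UB) :
  #|homs f (fds_prod ga gb)| = #|homs f ga| * #|homs f gb|.
Proof.
rewrite -cardsX.
pose Psi (p : {ffun T -> UA} * {ffun T -> UB}) : {ffun T -> UA * UB} :=
  [ffun x => (p.1 x, p.2 x)].
have Psi_inj : injective Psi.
  move=> [u1 v1] [u2 v2] E; congr (_, _); apply/ffunP => x;
  have := congr1 (fun h : {ffun T -> UA * UB} => h x) E; rewrite /= !ffunE => -[].
    by [].
  by [].
rewrite -(card_imset _ Psi_inj); apply: eq_card => k.
rewrite inE; apply/idP/imsetP.
  move=> hk; exists ([ffun x => (k x).1], [ffun x => (k x).2]).
    rewrite !inE /=; apply/andP; split; apply/forallP => x; rewrite !ffunE;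
    by have /eqP -> := forallP hk x.
  by apply/ffunP => x; rewrite !ffunE /=; case: (k x).
case=> -[u v]; rewrite !inE /= => /andP [hu hv] ->.
apply/forallP => x; rewrite !ffunE /fds_prod /=.
by rewrite (eqP (forallP hu x)) (eqP (forallP hv x)).
Qed.

Lemma iso_le (T U V : finType) (f : T -> T) (g1 : U -> U) (g2 : V -> V) (h : U -> V) :
  injective h -> (forall x, h (g1 x) = g2 (h x)) -> #|homs f g1| <= #|homs f g2|.
Proof.
move=> hinj hh.
pose Phi (k : {ffun T -> U}) : {ffun T -> V} := [ffun x => h (k x)].
have Phi_inj : injective Phi.
  move=> k1 k2 E; apply/ffunP => x; apply: hinj.
  by have := congr1 (fun m : {ffun T -> V} => m x) E; rewrite /= !ffunE.
rewrite -(card_imset _ Phi_inj); apply: subset_leq_card; apply/subsetP => k.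
case/imsetP => k0; rewrite inE => hk0 ->; rewrite inE.
apply/forallP => x; rewrite !ffunE -hh (eqP (forallP hk0 x)).
by [].
Qed.

Lemma iso_cnt (T U V : finType) (f : T -> T) (g1 : U -> U) (g2 : V -> V) :
  fds_iso g1 g2 -> #|homs f g1| = #|homs f g2|.
Proof.
case=> h [[h' hK h'K] hh]; apply/eqP; rewrite eqn_leq; apply/andP; split.
  exact: iso_le (can_inj hK) hh.
apply: (@iso_le _ _ _ f g2 g1 h'); first exact: can_inj h'K.
by move=> y; rewrite -{1}(h'K y) -hh hK.
Qed.

Lemma inj_of_cnt (T U : finType) (f : T -> T) (g : U -> U) :
  0 < cnt f g (diagT T) -> exists k : {ffun T -> U}, injective k /\ forall x, k (f x) = g (k x).
Proof.
case/card_gt0P => k; rewrite inE => /andP [hk /eqP kk]; exists k; split.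
  move=> x y E; have : (x, y) \in kerk k by rewrite inE /= E.
  by rewrite kk inE => /eqP.
by move=> x; apply/eqP; exact: (forallP hk x).
Qed.

Lemma id_cnt (T : finType) (f : T -> T) : 0 < cnt f f (diagT T).
Proof.
apply/card_gt0P; exists [ffun x => x]; rewrite inE; apply/andP; split.
  by apply/forallP => x; rewrite !ffunE.
by apply/eqP/setP => -[x y]; rewrite !inE /= !ffunE.
Qed.

Theorem mainTheorem12 (TA TB TC : finType) (a : TA -> TA) (b : TB -> TB) (c : TC -> TC) :
  dendron a -> dendron b -> dendron c ->
  fds_iso (fds_prod a b) (fds_prod a c) -> fds_iso b c.
Proof.
move=> [_ [s hs]] _ _ hiso.
have H : forall (T : finType) (f : T -> T), #|homs f b| = #|homs f c|.
  move=> T f; have := iso_cnt f hiso; rewrite !prod_cnt => /eqP.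
  rewrite eqn_pmul2l; first by move/eqP.
  apply/card_gt0P; exists [ffun _ => s]; rewrite inE; apply/forallP => x.
  by rewrite !ffunE hs.
have Hbc : 0 < cnt b c (diagT TB).
  by rewrite -(inj_cnt_eq H b (leqnn _)); apply: id_cnt.
have Hcb : 0 < cnt c b (diagT TC).
  by rewrite -(inj_cnt_eq (fun T f => esym (H T f)) c (leqnn _)); apply: id_cnt.
have [k [kinj kh]] := inj_of_cnt Hbc.
have [k' [k'inj _]] := inj_of_cnt Hcb.
exists k; split => //; apply: inj_card_bij kinj _.
exact: leq_card k'inj.
Qed.
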